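(* Let $N>0$, $R=\mathbb{Q}[x_1,x_2,y_1,y_2]$, and let $t_i,w_i,s_i,u_i$ and $X_\bullet=\{(u_1,u_2),(s_1,s_2)\}$, $X_\circ=\{(w_1,w_2),(t_1,t_2)\}$ be as in the context. Put $$\gamma=\frac{\partial u_1}{\partial y_1}-\frac{\partial u_1}{\partial y_2}-\frac12\frac{\partial u_2}{\partial y_2}(x_2+y_2)+\frac12\frac{\partial u_2}{\partial y_1}(x_1+y_1).$$ Then the partial differential equation $2z+\frac{\partial z}{\partial y_1}(y_1-x_1)+\frac{\partial z}{\partial y_2}(y_2-x_2)=\gamma$ in an unknown $z$ has a unique polynomial solution $\Omega_2(\gamma)\in R$, and the $R$-linear map $\chi_1:X_\bullet\to X_\circ$ defined by $\chi_1(1)=1+\Omega_2(\gamma)\,\theta_1\theta_2$, $\chi_1(\theta_1)=\theta_1+\theta_2$, $\chi_1(\theta_2)=\frac12(x_2+y_2)\theta_1+\frac12(x_1+y_1)\theta_2$, $\chi_1(\theta_1\theta_2)=\frac12(x_1+y_1-x_2-y_2)\theta_1\theta_2$ is a morphism of graded matrix factorisations such that $\pi_\circ\circ\chi_1$ is homotopic to $\mathrm{can}\circ\pi_\bullet$, where $\mathrm{can}:R/(s_1,s_2)\to R/(t_1,t_2)$ is the canonical surjection.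
   Context: Variables have degree $2$. $t_i=y_i-x_i$, $w_i=(y_i^{N+1}-x_i^{N+1})/(y_i-x_i)$, $s_1=y_1+y_2-x_1-x_2$, $s_2=y_1y_2-x_1x_2$, and $u_1,u_2\in R$ are homogeneous with $W:=y_1^{N+1}+y_2^{N+1}-x_1^{N+1}-x_2^{N+1}=u_1s_1+u_2s_2$ and $u_i(y_1,y_2,x_1,x_2)=u_i(x_1,x_2,y_1,y_2)$. For sequences $\boldsymbol a,\boldsymbol b$ of homogeneous elements with $\deg a_i+\deg b_i=2c$ (here $c=N+1$), the cyclic Koszul matrix factorisation $\{\boldsymbol a,\boldsymbol b\}$ of $\sum a_ib_i$ is the exterior algebra $\bigwedge F$ on $F=R\theta_1\oplus R\theta_2$, with $\theta_i$ of $\mathbb{Z}_2$-degree $1$ and internal degree $\deg a_i-c$, and differential $\delta_++\delta_-$ where $\delta_+=(\sum_ib_i\theta_i^* )\lrcorner(-)$ (contraction) and $\delta_-=(\sum_ia_i\theta_i)\wedge(-)$. $\pi_\bullet:X_\bullet\to R/(s_1,s_2)$ and $\pi_\circ:X_\circ\to R/(t_1,t_2)$ are the morphisms of linear factorisations (modules viewed as factorisations of zero) given by projecting onto $\bigwedge^0F=R$ and then onto the quotient. *)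

(* Defs.v *)
From HB Require Import structures.
From mathcomp Require Import all_boot all_order all_algebra.
From mathcomp Require Import mpoly.
Set Implicit Arguments. Unset Strict Implicit. Unset Printing Implicit Defensive.
Import Order.TTheory GRing.Theory Num.Theory.
Local Open Scope ring_scope.

Notation R := {mpoly rat[4]}.

Definition x1 : R := 'X_(inord 0).
Definition x2 : R := 'X_(inord 1).
Definition y1 : R := 'X_(inord 2).
Definition y2 : R := 'X_(inord 3).

Definition half : R := ((2 : rat)^-1)%:MP.

Definition dy1 (p : R) : R := mderiv (inord 2) p.
Definition dy2 (p : R) : R := mderiv (inord 3) p.

Definition swapxy (p : R) : R := p \mPo [tuple y1; y2; x1; x2].

Definition t1 : R := y1 - x1.
Definition t2 : R := y2 - x2.
Definition w1 (N : nat) : R := \sum_(k < N.+1) y1 ^+ k * x1 ^+ (N - k).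
  (* = (y1^(N+1) - x1^(N+1)) / (y1 - x1) *)
Definition w2 (N : nat) : R := \sum_(k < N.+1) y2 ^+ k * x2 ^+ (N - k).
Definition s1 : R := y1 + y2 - x1 - x2.
Definition s2 : R := y1 * y2 - x1 * x2.
Definition W (N : nat) : R := y1 ^+ N.+1 + y2 ^+ N.+1 - x1 ^+ N.+1 - x2 ^+ N.+1.

(* Internal grading: every variable has degree 2.  [ihom k p] means that p is
   homogeneous of internal degree k (the zero polynomial is homogeneous of
   every degree). *)
Definition ihom (k : int) (p : R) : Prop :=
  p = 0 \/ exists d : nat, k = (2 * d)%N%:Z /\ p \is d.-homog.

(* The exterior algebra /\F on F = R th1 (+) R th2 is free over R with basis
   b0 = 1, b1 = th1, b2 = th2, b3 = th1 th2 (indices 0..3 of 'I_4).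
   R-linear maps between such modules are encoded by 4x4 matrices M, where
   M i j is the coefficient of b_i in the image of b_j (so composition is
   the matrix product). *)
Definition oddb (i : 'I_4) : bool := (i == inord 1) || (i == inord 2).

(* matrix of delta = delta_+ + delta_-, delta_+ = (b1 th1^* + b2 th2^* ) _| (-),
   delta_- = (a1 th1 + a2 th2) /\ (-):
     delta 1        = a1 th1 + a2 th2
     delta th1      = b1 - a2 th1 th2
     delta th2      = b2 + a1 th1 th2
     delta th1 th2  = - b2 th1 + b1 th2                                    *)
Definition koszul (a1 a2 b1 b2 : R) : 'M[R]_4 :=
  \matrix_(i < 4, j < 4)
    match nat_of_ord i, nat_of_ord j with
    | 1, 0 => a1 | 2, 0 => a2
    | 0, 1 => b1 | 3, 1 => - a2
    | 0, 2 => b2 | 3, 2 => a1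
    | 1, 3 => - b2 | 2, 3 => b1
    | _, _ => 0
    end.

(* Internal degrees of the basis elements of {(a1,a2),(b1,b2)}, where the
   potential has degree 2c and deg a_i = da_i: th_i spans the shifted copy
   R{deg a_i - c}, whose generator has internal degree c - deg a_i, so that
   delta is homogeneous of degree c. *)
Definition koszul_deg (c da1 da2 : int) (i : 'I_4) : int :=
  match nat_of_ord i with
  | 0 => 0 | 1 => c - da1 | 2 => c - da2 | _ => (c - da1) + (c - da2)
  end.

Definition graded_mf_morphism (DX DY : 'M[R]_4) (degX degY : 'I_4 -> int)
    (M : 'M[R]_4) : Prop :=
  [/\ (forall i j, oddb i != oddb j -> M i j = 0),
      (forall i j, ihom (degX j - degY i) (M i j)) &
      DY *m M = M *m DX].

Definition in_ideal2 (g1 g2 f : R) : Prop := exists a b : R, f = a * g1 + b * g2.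

(* R-linear maps from a rank-2 Koszul factorisation X to the module
   R/(g1,g2) (a factorisation of 0, concentrated in even degree, with zero
   differential) are encoded by the row of lifts to R of the images of
   b0..b3.  Two such maps f, g are homotopic iff there is an odd R-linear map
   H : X -> R/(g1,g2) (so H vanishes on the even part) with
   f - g = d o H + H o delta = H o delta. *)
Definition homotopic_to_quot (g1 g2 : R) (DX : 'M[R]_4) (f g : 'rV[R]_4) : Prop :=
  exists h : 'rV[R]_4,
    (forall j, ~~ oddb j -> h 0 j = 0) /\
    (forall j, in_ideal2 g1 g2 (f 0 j - g 0 j - (h *m DX) 0 j)).

(* projection pi : {a,b} -> R/I onto /\^0 F = R, then the quotient;
   as a row of lifts: b0 |-> 1, others |-> 0 *)
Definition proj0 : 'rV[R]_4 := \row_(j < 4) (if nat_of_ord j == 0%N then 1 else 0).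

Definition Xbullet (u1 u2 : R) : 'M[R]_4 := koszul u1 u2 s1 s2.
Definition Xcirc (N : nat) : 'M[R]_4 := koszul (w1 N) (w2 N) t1 t2.

Definition gamma (u1 u2 : R) : R :=
  dy1 u1 - dy2 u1 - half * dy2 u2 * (x2 + y2) + half * dy1 u2 * (x1 + y1).

Definition pde_lhs (z : R) : R := 2 * z + dy1 z * (y1 - x1) + dy2 z * (y2 - x2).

Definition chi1 (Om : R) : 'M[R]_4 :=
  \matrix_(i < 4, j < 4)
    match nat_of_ord i, nat_of_ord j with
    | 0, 0 => 1 | 3, 0 => Om
    | 1, 1 => 1 | 2, 1 => 1
    | 1, 2 => half * (x2 + y2) | 2, 2 => half * (x1 + y1)
    | 3, 3 => half * (x1 + y1 - x2 - y2)
    | _, _ => 0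
    end.

(* Main.v *)
Require Import Defs.
From HB Require Import structures.
From mathcomp Require Import all_boot all_order all_algebra.
From mathcomp Require Import mpoly.
From mathcomp Require Import ring zify.
Import GRing.Theory Num.Theory.
Local Open Scope ring_scope.

Lemma mulX_coef (q : R) (i : 'I_4) m :
  (q * 'X_i)@_m = if (0 < m i)%N then q@_(m - U_(i))%MM else 0.
Proof.
case: ifP => Hm.
  have -> : m = (U_(i) + (m - U_(i)))%MM.
    apply/mnmP => j; rewrite mnmDE mnmBE mnm1E.
    case: eqP => [<-|_] /=; lia.
  rewrite mcoeffMX; congr (_@__); apply/mnmP => j.
  rewrite mnmBE [in RHS]mnmBE mnmDE mnmBE mnm1E; case: eqP => [<-|_] /=; lia.
apply/eqP; rewrite mcoeff_eq0 (perm_mem (msuppMX _ _)).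
apply/negP => /mapP [m' _ Em]; move: Hm; rewrite Em mnmDE mnm1E eqxx; lia.
Qed.

Lemma addBU (m : 'X_{1..4}) (i : 'I_4) : (0 < m i)%N -> (m - U_(i) + U_(i))%MM = m.
Proof.
move=> H; apply/mnmP => j; rewrite mnmDE mnmBE mnm1E; case: eqP => [<-|_] /=; lia.
Qed.

Lemma XD_coef (p : R) (i : 'I_4) m :
  (mderiv i p * 'X_i)@_m = p@_m *+ m i.
Proof.
rewrite mulX_coef; case: ifP => H.
  rewrite mcoeff_deriv addBU // mnmBE mnm1E eqxx; congr (_ *+ _); lia.
by have -> : m i = 0%N by lia.
Qed.

Definition Eul (p : R) : R := \sum_(i < 4) mderiv i p * 'X_i.

Lemma Eul_coef p m : (Eul p)@_m = p@_m *+ mdeg m.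
Proof.
rewrite /Eul raddf_sum /= mdegE -sumrMnr; apply: eq_bigr => i _.
exact: XD_coef.
Qed.

Lemma Eul_homog p (d : nat) : p \is d.-homog -> Eul p = p *+ d.
Proof.
move=> /dhomogP H; apply/mpolyP => m; rewrite Eul_coef mcoeffMn.
case: (boolP (m \in msupp p)) => [/H -> //|]. 
by rewrite -mcoeff_eq0 => /eqP ->; rewrite !mul0rn.
Qed.

Lemma homog_Eul p (d : nat) : Eul p = p *+ d -> p \is d.-homog.
Proof.
move=> H; apply/dhomogP => m; rewrite mcoeff_msupp => nz.
have := congr1 (mcoeff m) H.
rewrite Eul_coef mcoeffMn -[_ *+ mdeg m]mulr_natl -[_ *+ d]mulr_natl.
move/(mulIf nz)/eqP.
rewrite eqr_nat.
by move/eqP.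
Qed.

Lemma EulD p q : Eul (p + q) = Eul p + Eul q.
Proof. by rewrite /Eul -big_split; apply: eq_bigr => i _; rewrite mderivD mulrDl. Qed.

Lemma EulM p q : Eul (p * q) = Eul p * q + p * Eul q.
Proof.
rewrite /Eul mulr_suml mulr_sumr -big_split; apply: eq_bigr => i _.
rewrite mderivM /=; ring.
Qed.

Lemma Xnth (i : 'I_4) : 'X_i = nth 0 [:: x1; x2; y1; y2] i :> R.
Proof.
case: i => [[|[|[|[|k]]]] Hk] //=; rewrite /x1/x2/y1/y2; congr mpolyX; congr mnm1; apply: val_inj; by rewrite /= inordK.
Qed.

Definition sgm (p : R) : R := p \mPo [tuple x1; x2; y1; x2].
Definition cong (a b : R) := exists q, a - b = q * t2.

Lemma cong_refl a : cong a a.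
Proof. by exists 0; rewrite subrr mul0r. Qed.

Lemma cong_mul a b c d : cong a b -> cong c d -> cong (a * c) (b * d).
Proof.
move=> [q1 H1] [q2 H2]; exists (a * q2 + q1 * d).
have -> : a * c - b * d = a * (c - d) + (a - b) * d by ring.
rewrite H1 H2; ring.
Qed.

Lemma cong_add a b c d : cong a b -> cong c d -> cong (a + c) (b + d).
Proof.
move=> [q1 H1] [q2 H2]; exists (q1 + q2).
have -> : a + c - (b + d) = (a - b) + (c - d) by ring.
rewrite H1 H2; ring.
Qed.

Lemma cong_exp a b k : cong a b -> cong (a ^+ k) (b ^+ k).
Proof.
move=> H; elim: k => [|k IH]; first by rewrite !expr0; apply: cong_refl.
by rewrite !exprS; apply: cong_mul.
Qed.

Lemma sig_cong p : cong p (sgm p).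
Proof.
elim/mpolyind: p => [|c m p _ _ IH].
  by rewrite /sgm comp_mpoly0; apply: cong_refl.
rewrite /sgm raddfD /= comp_mpolyZ -!mul_mpolyC; apply: cong_add => //.
apply: cong_mul; first exact: cong_refl.
rewrite {1}mpolyXE_id comp_mpolyX.
apply: (big_ind2 cong) => [|a b c0 d|i _]; first exact: cong_refl.
  exact: cong_mul.
apply: cong_exp; rewrite Xnth.
case: i => [[|[|[|[|k]]]] Hk] //=; try exact: cong_refl.
  by exists 1; rewrite mul1r.
Qed.

Lemma sig_div p : exists q, p - sgm p = q * t2.
Proof. exact: sig_cong. Qed.

Lemma half2 : Defs.half * 2 = 1.
Proof. by rewrite /Defs.half -(mpolyC_nat _ _ 2) -mpolyCM mulVf // mpolyC1. Qed.

Lemma inord_neq (a b : nat) : (a < 4)%N -> (b < 4)%N -> a != b -> (inord a : 'I_4) != inord b.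
Proof. by move=> Ha Hb Hab; rewrite -(inj_eq val_inj) /= !inordK. Qed.

Lemma X_neq (a b : nat) : (a < 4)%N -> (b < 4)%N -> a != b ->
  ('X_(inord a) : R) - 'X_(inord b) != 0.
Proof.
move=> Ha Hb Hab; apply/eqP => /(congr1 (mcoeff U_(inord a))).
rewrite mcoeffB !mcoeffXU eqxx eq_sym (negbTE (@inord_neq a b Ha Hb Hab)) subr0 mcoeff0.
by move/eqP; rewrite oner_eq0.
Qed.

Lemma t1_neq0 : t1 != 0. Proof. exact: X_neq. Qed.
Lemma t2_neq0 : t2 != 0. Proof. exact: X_neq. Qed.

Lemma sgmX (a : nat) : (a < 4)%N -> sgm 'X_(inord a) = nth 0 [:: x1; x2; y1; x2] a.
Proof. by move=> Ha; rewrite /sgm comp_mpolyXU /= inordK. Qed.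

Lemma sigB a b : sgm (a - b) = sgm a - sgm b. Proof. exact: comp_mpolyB. Qed.
Lemma sigD a b : sgm (a + b) = sgm a + sgm b. Proof. exact: comp_mpolyD. Qed.
Lemma sigM a b : sgm (a * b) = sgm a * sgm b. Proof. exact: rmorphM. Qed.
Lemma sig0 : sgm 0 = 0. Proof. exact: comp_mpoly0. Qed.

Lemma sig_t1 : sgm t1 = t1.
Proof. by rewrite /t1 sigB /y1 /x1 !sgmX. Qed.
Lemma sig_t2 : sgm t2 = 0.
Proof. by rewrite /t2 sigB /y2 /x2 !sgmX // subrr. Qed.

Lemma tel (a b : R) (N : nat) :
  (a - b) * (\sum_(k < N.+1) a ^+ k * b ^+ (N - k)) = a ^+ N.+1 - b ^+ N.+1.
Proof.
have := subrXX b a N.+1.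
move=> H; apply: oppr_inj; rewrite opprB H /= -mulNr opprB.
congr (_ * _); apply: eq_bigr => i _; rewrite mulrC; congr (_ * _); congr (_ ^+ _); lia.
Qed.

Definition h1 : R := Defs.half * (x1 + y1).
Definition h2 : R := Defs.half * (x2 + y2).

Lemma omega_exists (N : nat) (u1 u2 : R) :
  W N = u1 * s1 + u2 * s2 ->
  exists Om : R, w1 N = Om * t2 + u1 + u2 * h2 /\ w2 N = - (Om * t1) + u1 + u2 * h1.
Proof.
move=> HW.
set F := w1 N - u1 - u2 * h2; set G := w2 N - u1 - u2 * h1.
have W' : W N = t1 * w1 N + t2 * w2 N by rewrite /t1 /t2 /w1 /w2 !tel /W; ring.
have K : t1 * F + t2 * G = (W N - u1 * s1 - u2 * s2) + (1 - Defs.half * 2) * (u2 * s2).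
  rewrite W' /F /G /h1 /h2 /t1 /t2 /s1 /s2; ring.
have {}K : t1 * F + t2 * G = 0 by rewrite K HW half2; ring.
have sF : sgm F = 0.
  have := congr1 sgm K; rewrite sigD !sigM sig_t1 sig_t2 mul0r addr0 sig0.
  by move/eqP; rewrite mulf_eq0 (negbTE t1_neq0) /= => /eqP.
have [Om HOm] := sig_div F; rewrite sF subr0 in HOm.
exists Om; split.
  have -> : w1 N = F + u1 + u2 * h2 by rewrite /F; ring.
  by rewrite HOm.
have : t2 * (G + Om * t1) = 0 by rewrite -K HOm; ring.
move/eqP; rewrite mulf_eq0 (negbTE t2_neq0) /= => /eqP HG.
have -> : w2 N = G + u1 + u2 * h1 by rewrite /G; ring.
have -> : G = - (Om * t1) by rewrite -[G](addrK (Om * t1)) HG sub0r.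
done.
Qed.

Lemma dvar (a b : nat) : (a < 4)%N -> (b < 4)%N ->
  mderiv (inord a) ('X_(inord b) : R) = (b == a)%:R.
Proof.
move=> Ha Hb; rewrite mderivX mnm1E.
have -> : ((inord b : 'I_4) == inord a) = (b == a).
  by apply/eqP/eqP => [/(congr1 val)|->//]; rewrite /= !inordK.
case: eqP => [->|_]; last by rewrite scale0r.
have -> : (U_(inord a) - U_(inord a))%MM = 0%MM :> 'X_{1..4} by apply/mnmP => j; rewrite mnmBE mnm0E subnn.
by rewrite mpolyX0 scale1r.
Qed.

Lemma dhalf i (p : R) : mderiv i (Defs.half * p) = Defs.half * mderiv i p.
Proof. exact: mderiv_mulC. Qed.

Lemma dexp0 i (p : R) k : mderiv i p = 0 -> mderiv i (p ^+ k) = 0.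
Proof.
move=> H; elim: k => [|k IH]; first by rewrite expr0 mderivC.
by rewrite exprS mderivM H IH mulr0 mul0r addr0.
Qed.

Lemma dw1 N : dy2 (w1 N) = 0.
Proof.
rewrite /dy2 /w1 raddf_sum /=; apply: big1 => k _.
by rewrite mderivM !dexp0 ?mulr0 ?mul0r ?addr0 // /x1 /y1 dvar.
Qed.

Lemma dw2 N : dy1 (w2 N) = 0.
Proof.
rewrite /dy1 /w2 raddf_sum /=; apply: big1 => k _.
by rewrite mderivM !dexp0 ?mulr0 ?mul0r ?addr0 // /x2 /y2 dvar.
Qed.

Lemma pde_ok (N : nat) (u1 u2 Om : R) :
  w1 N = Om * t2 + u1 + u2 * h2 -> w2 N = - (Om * t1) + u1 + u2 * h1 ->
  pde_lhs Om = gamma u1 u2.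
Proof.
move=> A B.
have EA : dy2 Om * t2 + Om + dy2 u1 + dy2 u2 * h2 + u2 * Defs.half = 0.
  have := congr1 dy2 A; rewrite dw1 /dy2 /t2 /h2 !(mderivD, mderivB, mderivM, dhalf).
  rewrite /x2 /y2 ?mderivN !dvar //= => E; rewrite [RHS]E; ring.
have EB : dy1 u1 + dy1 u2 * h1 + u2 * Defs.half - dy1 Om * t1 - Om = 0.
  have := congr1 dy1 B; rewrite dw2 /dy1 /t1 /h1 !(mderivD, mderivB, mderivN, mderivM, dhalf).
  rewrite /x1 /y1 ?mderivN !dvar //= => E; rewrite [RHS]E; ring.
apply/eqP; rewrite -subr_eq0; apply/eqP.
have -> : pde_lhs Om - gamma u1 u2 =
  (dy2 Om * t2 + Om + dy2 u1 + dy2 u2 * h2 + u2 * Defs.half) -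
  (dy1 u1 + dy1 u2 * h1 + u2 * Defs.half - dy1 Om * t1 - Om).
  rewrite /pde_lhs /gamma /h1 /h2 /t1 /t2; ring.
by rewrite EA EB subr0.
Qed.

Notation i0 := (inord 0 : 'I_4).
Notation i1 := (inord 1 : 'I_4).
Notation i2 := (inord 2 : 'I_4).
Notation i3 := (inord 3 : 'I_4).

Lemma ieq (a b : nat) : (a < 4)%N -> (b < 4)%N -> ((inord a : 'I_4) == inord b) = (a == b).
Proof. by move=> Ha Hb; apply/eqP/eqP => [/(congr1 val)|->//]; rewrite /= !inordK. Qed.

Definition ydeg (m : 'X_{1..4}) := (m i2 + m i3)%N.

Lemma ydeg_le m : (ydeg m <= mdeg m)%N.
Proof.
rewrite /ydeg mdegE (bigD1 i2) //= (bigD1 i3) /=; last by rewrite ieq.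
lia.
Qed.

Lemma shift_coef (z : R) (a b : 'I_4) m :
  (mderiv b z * 'X_a)@_m = if (0 < m a)%N then z@_(m - U_(a) + U_(b))%MM *+ ((m - U_(a))%MM b).+1 else 0.
Proof. by rewrite mulX_coef; case: ifP => // _; rewrite mcoeff_deriv. Qed.

Lemma pde_uniq0 z : pde_lhs z = 0 -> z = 0.
Proof.
move=> H.
have key : forall n m, (msize z <= ydeg m + n)%N -> z@_m = 0.
  elim => [|n IH] m Hm.
    apply/eqP; rewrite mcoeff_eq0; apply: msize_mdeg_ge.
    by apply: leq_trans (ydeg_le m); rewrite -(addn0 (ydeg m)).
  have E : pde_lhs z = z *+ 2 + mderiv i2 z * 'X_i2 - mderiv i2 z * 'X_i0
      + mderiv i3 z * 'X_i3 - mderiv i3 z * 'X_i1.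
    by rewrite /pde_lhs /dy1 /dy2 /x1 /x2 /y1 /y2; ring.
  have := congr1 (mcoeff m) H; rewrite E !(mcoeffD, mcoeffB, mcoeffN) mcoeff0 !XD_coef !shift_coef.
  rewrite (IH (m - U_(i0) + U_(i2))%MM); last first.
    move: Hm; rewrite /ydeg !(mnmDE, mnmBE, mnm1E) !ieq //=; lia.
  rewrite (IH (m - U_(i1) + U_(i3))%MM); last first.
    move: Hm; rewrite /ydeg !(mnmDE, mnmBE, mnm1E) !ieq //=; lia.
  rewrite !mul0rn !if_same !oppr0 !addr0 => E'.
  have : z@_m *+ (m i2 + m i3).+2 = 0 by rewrite -[RHS]E'; ring.
  by move/eqP; rewrite mulrn_eq0 /= => /eqP.
apply/mpolyP => m; rewrite mcoeff0; apply: (key (msize z)); exact: leq_addl.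
Qed.

Lemma var_homog (a : nat) : ('X_(inord a) : R) \is 1.-homog.
Proof. by rewrite dhomogX; apply/eqP; apply: mdeg1. Qed.

Lemma half_homog (p : R) d : p \is d.-homog -> Defs.half * p \is d.-homog.
Proof. by move=> H; rewrite /Defs.half mul_mpolyC; apply: dhomogZ. Qed.

Lemma t2_homog : t2 \is 1.-homog.
Proof. by apply: rpredB; apply: var_homog. Qed.

Lemma h2_homog : h2 \is 1.-homog.
Proof. by apply: half_homog; apply: rpredD; apply: var_homog. Qed.

Lemma w1_homog N : w1 N \is N.-homog.
Proof.
apply: rpred_sum => k _.
have := dhomogM (dhomogMn k (var_homog 2)) (dhomogMn (N - k) (var_homog 0)).
have -> : (1 * k + 1 * (N - k))%N = N by have := ltn_ord k; lia.
done.
Qed.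

Lemma Om_homog (N : nat) (u1 u2 Om : R) : (0 < N)%N ->
  u1 \is N.-homog -> u2 \is N.-1.-homog ->
  w1 N = Om * t2 + u1 + u2 * h2 -> Om \is N.-1.-homog.
Proof.
move=> N0 H1 H2 A.
have HF : w1 N - u1 - u2 * h2 \is N.-homog.
  apply: rpredB; first exact: rpredB (w1_homog N) H1.
  have := dhomogM H2 h2_homog; by rewrite addn1 prednK.
have EF : w1 N - u1 - u2 * h2 = Om * t2 by rewrite A; ring.
rewrite EF in HF; apply: homog_Eul.
have := Eul_homog _ _ HF; rewrite EulM (Eul_homog _ _ t2_homog) mulr1n.
rewrite -(prednK N0) mulrSr -mulrnAl => /addIr; exact: (mulIf t2_neq0).
Qed.

Lemma mod_half (a b k : R) : a - b = (Defs.half * 2 - 1) * k -> a = b.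
Proof. by rewrite half2 subrr mul0r => /eqP; rewrite subr_eq0 => /eqP. Qed.

Lemma chi_comm (N : nat) (u1 u2 Om : R) :
  w1 N = Om * t2 + u1 + u2 * h2 -> w2 N = - (Om * t1) + u1 + u2 * h1 ->
  Xcirc N *m chi1 Om = chi1 Om *m Xbullet u1 u2.
Proof.
move=> A B; apply/matrixP => i j; rewrite /Xcirc /Xbullet /koszul /chi1 !mxE !big_ord_recr !big_ord0 /= !mxE /=.
case: i => [[|[|[|[|i]]]] Hi] //; case: j => [[|[|[|[|j]]]] Hj] //=;
  rewrite ?A ?B /h1 /h2 /t1 /t2 /s1 /s2;
  first [ ring | apply: (@mod_half _ _ (s2)); rewrite /s2; ring
        | apply: (@mod_half _ _ (- s2)); rewrite /s2; ring
        | apply: (@mod_half _ _ (Om * s2)); rewrite /s2; ring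
        | apply: (@mod_half _ _ (- (Om * s2))); rewrite /s2; ring ].
Qed.

Lemma oddbE (i : 'I_4) : Defs.oddb i = (nat_of_ord i == 1%N) || (nat_of_ord i == 2%N).
Proof. by rewrite /Defs.oddb -!(inj_eq val_inj) /= !inordK. Qed.

Lemma ihom_homog (k : int) (d : nat) (p : R) : ihom k p -> k = (2 * d)%N%:Z -> p \is d.-homog.
Proof.
case=> [->|[d' [E H]]] Hk; first exact: rpred0.
rewrite Hk in E; case: E => E.
by have -> : d = d' by lia.
Qed.

Lemma test_int (N : nat) : (0 < N)%N -> 2 * N%:Z - 2 = (2 * N.-1)%N%:Z.
Proof. move=> H. lia. Qed.

Theorem lemmaA4 (N : nat) (u1 u2 : R) :
  (0 < N)%N ->
  ihom (2 * N%:Z) u1 -> ihom (2 * N%:Z - 2) u2 ->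
  W N = u1 * s1 + u2 * s2 ->
  swapxy u1 = u1 -> swapxy u2 = u2 ->
  exists Om : R,
    [/\ pde_lhs Om = gamma u1 u2,
        (forall z : R, pde_lhs z = gamma u1 u2 -> z = Om),
        graded_mf_morphism (Xbullet u1 u2) (Xcirc N)
          (koszul_deg (N%:Z + 1) (2 * N%:Z) (2 * N%:Z - 2))
          (koszul_deg (N%:Z + 1) (2 * N%:Z) (2 * N%:Z))
          (chi1 Om) &
        homotopic_to_quot t1 t2 (Xbullet u1 u2) (proj0 *m chi1 Om) proj0].
Proof.
move=> N0 Hu1 Hu2 HW _ _.
have H1 : u1 \is N.-homog by apply: (@ihom_homog _ _ _ Hu1); lia.
have H2 : u2 \is N.-1.-homog by apply: (@ihom_homog _ _ _ Hu2); lia.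
have [Om [A B]] := @omega_exists _ _ _ HW.
have HOm := @Om_homog _ _ _ _ N0 H1 H2 A.
have Hpde := @pde_ok _ _ _ _ A B.
exists Om; split => //.
- move=> z Hz; apply/eqP; rewrite -subr_eq0; apply/eqP; apply: pde_uniq0.
  have -> : pde_lhs (z - Om) = pde_lhs z - pde_lhs Om.
    by rewrite /pde_lhs /dy1 /dy2 !mderivB; ring.
  by rewrite Hz Hpde subrr.
- split; last exact: (@chi_comm _ _ _ _ A B).
  + move=> i j; rewrite !oddbE /chi1 mxE.
    by case: i => [[|[|[|[|i]]]] Hi] //; case: j => [[|[|[|[|j]]]] Hj].
  + move=> i j; rewrite /chi1 mxE.
    case: i => [[|[|[|[|i]]]] Hi] //; case: j => [[|[|[|[|j]]]] Hj] //=;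
      try (by left).
    * right; exists 0%N; split; first by rewrite /koszul_deg /=; lia.
      by rewrite dhomog1.
    * right; exists 0%N; split; first by rewrite /koszul_deg /=; lia.
      by rewrite dhomog1.
    * right; exists 1%N; split; first by rewrite /koszul_deg /=; lia.
      by apply: half_homog; apply: rpredD; apply: var_homog.
    * right; exists 0%N; split; first by rewrite /koszul_deg /=; lia.
      by rewrite dhomog1.
    * right; exists 1%N; split; first by rewrite /koszul_deg /=; lia.
      by apply: half_homog; apply: rpredD; apply: var_homog.
    * right; exists N.-1; split; first by rewrite /koszul_deg /=; lia.
      exact: HOm.
    * right; exists 1%N; split; first by rewrite /koszul_deg /=; lia.
      by apply: half_homog; apply: rpredB; [apply: rpredB; [apply: rpredD|]|]; apply: var_homog.
- exists 0; split => [j _|j]; first by rewrite mxE.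
  exists 0, 0; rewrite mul0mx !mxE !big_ord_recr !big_ord0 /= !mxE /=.
  case: j => [[|[|[|[|j]]]] Hj] //=; ring.
Qed.
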